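(* Let $p$ be a prime and, in characteristic $p$, let $\chi_p(z):=\operatorname{Tr}[A(z+p-1)A(z+p-2)\cdots A(z+1)A(z)]$. Then $$\chi_p(z)=\begin{cases}\mathcal{I}_p-t^pz+t^pz^p, & p\neq2,\\ \mathcal{I}_2+(1+t^2)(z+z^2), & p=2.\end{cases}$$
   Context: Define the $2\times2$ matrix polynomial in $z$ with coefficients in $\mathbb{Z}[f,g,\alpha_1,\alpha_2,t,w,w^{-1}]$: $$A(z)=\begin{bmatrix}w&0\\0&1\end{bmatrix}\begin{bmatrix}1&0\\ f-tfg-tz&1\end{bmatrix}\begin{bmatrix}g&1\\ z+\alpha_2&0\end{bmatrix}\begin{bmatrix}-f&1\\ z&0\end{bmatrix}\begin{bmatrix}tz-g+tfg&1\\ z-\alpha_1&0\end{bmatrix}\begin{bmatrix}w^{-1}&0\\0&1\end{bmatrix},$$ and $\mathcal{I}_p:=\operatorname{Tr}[A(p-1)\cdots A(1)A(0)]$ computed in characteristic $p$, an element of $\mathbb{F}_p[f,g,\alpha_1,\alpha_2,t]$ (independent of $w$). *)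

(* Defs.v *)
From HB Require Import structures.
From mathcomp Require Import all_boot all_order all_algebra.
Set Implicit Arguments. Unset Strict Implicit. Unset Printing Implicit Defensive.
Import GRing.Theory.
Local Open Scope ring_scope.

Definition mx2 (S : pzRingType) (a b c d : S) : 'M[S]_2 :=
  \matrix_(i < 2, j < 2)
    if val i == 0%N then (if val j == 0%N then a else b)
    else (if val j == 0%N then c else d).

(* A(z) with parameters f g al1 al2 t, and w, wi standing for w and w^{-1}. *)
Definition Amat (S : comPzRingType) (f g al1 al2 t w wi z : S) : 'M[S]_2 :=
  mx2 w 0 0 1
  *m mx2 1 0 (f - t * f * g - t * z) 1
  *m mx2 g 1 (z + al2) 0
  *m mx2 (- f) 1 z 0
  *m mx2 (t * z - g + t * f * g) 1 (z - al1) 0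
  *m mx2 wi 0 0 1.

Definition Ip (R : comUnitRingType) (p : nat) (f g al1 al2 t w : R) : R :=
  \tr (\prod_(i < p) Amat f g al1 al2 t w w^-1 ((p.-1 - i)%N)%:R : 'M[R]_2).

Definition chip (R : comUnitRingType) (p : nat) (f g al1 al2 t w : R) : {poly R} :=
  \tr (\prod_(i < p)
         Amat f%:P g%:P al1%:P al2%:P t%:P w%:P (w^-1)%:P ('X + ((p.-1 - i)%N)%:R)
       : 'M[{poly R}]_2).

(* Main.v *)
Require Import Defs.
From HB Require Import structures.
From mathcomp Require Import all_boot all_order all_algebra.
From mathcomp Require Import ring zify.
Import GRing.Theory.
Local Open Scope ring_scope.

Fixpoint pr {T : pzRingType} (n : nat) (M : nat -> T) : T :=
  match n with 0%N => 1 | n'.+1 => M n' * pr n' M end.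

Lemma pr_big {T : pzRingType} n (M : nat -> T) :
  \prod_(i < n) M (n.-1 - i)%N = pr n M.
Proof.
elim: n M => [|n IH] M /=; first by rewrite big_ord0.
rewrite big_ord_recl /= subn0; congr (_ * _).
rewrite -IH; apply: eq_bigr => i _ /=; congr (M _); rewrite /bump /=; lia.
Qed.

Lemma prS {T : pzRingType} n (M : nat -> T) : pr n.+1 M = M n * pr n M.
Proof. by []. Qed.

Lemma pr_ext {T : pzRingType} n (M N : nat -> T) :
  (forall k, (k < n)%N -> M k = N k) -> pr n M = pr n N.
Proof.
elim: n => [|n IH] H //=; rewrite H // IH // => k Hk; apply: H; lia.
Qed.

Lemma pr_split {T : pzRingType} a b (M : nat -> T) :
  pr (a + b) M = pr b (fun k => M (a + k)%N) * pr a M.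
Proof.
elim: b => [|b IH] /=; first by rewrite addn0 mul1r.
by rewrite addnS /= IH mulrA.
Qed.

Lemma pr_recl {T : pzRingType} n (M : nat -> T) :
  pr n.+1 M = pr n (fun k => M k.+1) * M 0%N.
Proof. by rewrite -add1n pr_split /= mulr1. Qed.

Lemma pr_morph {T U : pzRingType} (phi : {rmorphism T -> U}) n (M : nat -> T) :
  phi (pr n M) = pr n (fun k => phi (M k)).
Proof. by elim: n => [|n IH] /=; rewrite ?rmorph1 // rmorphM IH. Qed.

Lemma pr_const {T : pzRingType} n (c : T) : pr n (fun _ => c) = c ^+ n.
Proof. by elim: n => [|n IH] //=; rewrite IH exprS. Qed.

Lemma coefM_top {T : nzRingType} (a b : {poly T}) m n :
  (size a <= m.+1)%N -> (size b <= n.+1)%N -> (a * b)`_(m + n) = a`_m * b`_n.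
Proof.
move=> Ha Hb; rewrite coefM (bigD1 (Ordinal (leq_addr n m.+1))) //= big1 ?addr0.
  by rewrite addKn.
move=> i /= Hi; have [lt|gt] := ltnP i m.
  rewrite [b`__](nth_default 0) ?mulr0 //; apply: leq_trans Hb _; clear Hi; move: (nat_of_ord i) lt => k lt; clear -lt; lia.
have Hne : (i != m :> nat) by apply/eqP => E; move: Hi; rewrite -val_eqE /= E eqxx.
rewrite [a`__](nth_default 0) ?mul0r //; apply: leq_trans Ha _.
by move: (nat_of_ord i) gt Hne => k gt /eqP Hne; clear -gt Hne; lia.
Qed.

Lemma pr_top {T : nzRingType} n (M : nat -> {poly T}) :
  (forall k, (size (M k) <= 2)%N) ->
  (size (pr n M) <= n.+1)%N /\ (pr n M)`_n = pr n (fun k => (M k)`_1).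
Proof.
move=> HM; elim: n => [|n [IH1 IH2]] /=; first by rewrite size_poly1 coefC.
split; first by apply: leq_trans (size_polyMleq _ _) _; have := HM n; lia.
by rewrite -add1n coefM_top // IH2.
Qed.
Definition i0 : 'I_2 := ord0.
Definition i1 : 'I_2 := ord_max.

Section MX2.
Variable S : pzRingType.
Implicit Types a b c d : S.

Lemma sum2 (F : 'I_2 -> S) : \sum_(k < 2) F k = F i0 + F i1.
Proof. by rewrite !big_ord_recl big_ord0 addr0; congr (_ + F _); apply: val_inj. Qed.

Lemma mx2E a b c d :
  [/\ mx2 a b c d i0 i0 = a, mx2 a b c d i0 i1 = b,
      mx2 a b c d i1 i0 = c & mx2 a b c d i1 i1 = d].
Proof. by split; rewrite mxE. Qed.

Lemma mx2_eta (A : 'M[S]_2) : A = mx2 (A i0 i0) (A i0 i1) (A i1 i0) (A i1 i1).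
Proof.
by apply/matrixP => i j; rewrite !mxE; case: i j => [[|[|//]] ?] [[|[|//]] ?];
  congr (A _ _); apply: val_inj.
Qed.

Lemma mx2_mul a b c d a' b' c' d' :
  mx2 a b c d * mx2 a' b' c' d' =
  mx2 (a * a' + b * c') (a * b' + b * d') (c * a' + d * c') (c * b' + d * d').
Proof.
by apply/matrixP => i j; rewrite -mulmxE !mxE sum2 !mxE /=;
  case: i j => [[|[|//]] ?] [[|[|//]] ?].
Qed.

Lemma mx2_add a b c d a' b' c' d' :
  mx2 a b c d + mx2 a' b' c' d' = mx2 (a + a') (b + b') (c + c') (d + d').
Proof. by apply/matrixP => i j; rewrite !mxE; case: ifP; case: ifP. Qed.

Lemma mx2_tr a b c d : \tr (mx2 a b c d) = a + d.
Proof. by rewrite /mxtrace sum2 !mxE. Qed.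

Lemma mx2_1 : mx2 1 0 0 1 = 1 :> 'M[S]_2.
Proof.
by apply/matrixP => i j; rewrite !mxE; case: i j => [[|[|//]] ?] [[|[|//]] ?].
Qed.

Lemma mx2_0 : mx2 0 0 0 0 = 0 :> 'M[S]_2.
Proof. by apply/matrixP => i j; rewrite !mxE; case: ifP; case: ifP. Qed.

Lemma mulmx2E (A B : 'M[S]_2) i j : (A * B) i j = A i i0 * B i0 j + A i i1 * B i1 j.
Proof. by rewrite -mulmxE !mxE sum2. Qed.

Lemma tr2E (A : 'M[S]_2) : \tr A = A i0 i0 + A i1 i1.
Proof. by rewrite /mxtrace sum2. Qed.

End MX2.

Lemma mx2_map (S T : pzRingType) (h : S -> T) a b c d :
  map_mx h (mx2 a b c d) = mx2 (h a) (h b) (h c) (h d).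
Proof. by apply/matrixP => i j; rewrite !mxE; case: ifP; case: ifP. Qed.

Lemma trC {S : comPzRingType} (A B : 'M[S]_2) : \tr (A * B) = \tr (B * A).
Proof. by rewrite -!mulmxE mxtrace_mulC. Qed.

Section Main.
Variables (R : comUnitRingType) (p : nat) (f g a1 a2 t w : R).
Hypothesis Hp : p \in [pchar R].
Hypothesis Hw : w \is a GRing.unit.

Local Notation S := {poly R}.

Lemma Hp0 : p%:R = 0 :> R. Proof. exact: pcharf0 Hp. Qed.
Lemma Hp0S : p%:R = 0 :> S. Proof. by rewrite -polyC_natr Hp0. Qed.
Lemma Hprime : prime p. Proof. exact: pcharf_prime Hp. Qed.

Definition zk (k : nat) : S := 'X + k%:R.

Lemma zk_p k : zk (k + p) = zk k.
Proof. by rewrite /zk natrD Hp0S addr0. Qed.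

Definition sc := f - g + t.
Definition al := - (f * g * sc) - g * a1.
Definition be := a1 + f * sc.
Definition P00 (y : S) := (f + t)%:P * y + al%:P.
Definition P01 (y : S) := y - (f * g)%:P.
Definition P10 (y : S) := (y + a2%:P) * (y - be%:P).
Definition P11 (y : S) := - (f%:P * (y + a2%:P)).
Definition Pm (y : S) : 'M[S]_2 := mx2 (P00 y) (P01 y) (P10 y) (P11 y).

Definition Lm (y : S) : 'M[S]_2 :=
  mx2 1 0 (f%:P - t%:P * f%:P * g%:P - t%:P * y) 1.
Definition Km (y : S) : 'M[S]_2 :=
  mx2 g%:P 1 (y + a2%:P) 0 * mx2 (- f%:P) 1 y 0 *
  mx2 (t%:P * y - g%:P + t%:P * f%:P * g%:P) 1 (y - a1%:P) 0.
Definition Wm : 'M[S]_2 := mx2 w%:P 0 0 1.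
Definition Wi : 'M[S]_2 := mx2 (w^-1)%:P 0 0 1.

Lemma Amat_dec y :
  Amat f%:P g%:P a1%:P a2%:P t%:P w%:P (w^-1)%:P y = Wm * (Lm y * Km y) * Wi.
Proof. by rewrite /Amat !mulmxE !mulrA. Qed.

Lemma KL y y' : y = y' + 1 -> Km y * Lm y' = Pm y.
Proof.
move=> ->; rewrite /Km /Lm /Pm /P00 /P01 /P10 /P11 /al /be /sc !mx2_mul.
rewrite !(polyCD, polyCN, polyCM, polyCB).
by congr mx2; ring.
Qed.

Lemma WiW : Wi * Wm = 1.
Proof. by rewrite /Wi /Wm mx2_mul -polyCM mulVr // !(mul0r, mulr0, addr0, add0r, mulr1) mx2_1. Qed.
Lemma WWi : Wm * Wi = 1.
Proof. by rewrite /Wi /Wm mx2_mul -polyCM mulrV // !(mul0r, mulr0, addr0, add0r, mulr1) mx2_1. Qed.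

Lemma pr_WAW n (X : nat -> 'M[S]_2) :
  pr n (fun k => Wm * X k * Wi) = Wm * pr n X * Wi.
Proof.
elim: n => [|n IH] /=; first by rewrite mulr1 WWi.
by rewrite IH !mulrA -[_ * Wi * Wm]mulrA WiW mulr1.
Qed.

Lemma pr_LK n :
  pr n.+1 (fun k => Lm (zk k) * Km (zk k)) =
  Lm (zk n) * pr n (fun k => Km (zk k.+1) * Lm (zk k)) * Km (zk 0).
Proof.
elim: n => [|n IH]; first by rewrite /= !mulr1.
by rewrite prS IH prS !mulrA.
Qed.

Lemma chip_P : chip p f g a1 a2 t w = \tr (pr p (fun k => Pm (zk k))).
Proof.
rewrite /chip (pr_big p (fun k => Amat f%:P g%:P a1%:P a2%:P t%:P w%:P (w^-1)%:P (zk k))).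
have -> : pr p (fun k => Amat f%:P g%:P a1%:P a2%:P t%:P w%:P (w^-1)%:P (zk k))
    = pr p (fun k => Wm * (Lm (zk k) * Km (zk k)) * Wi).
  by apply: pr_ext => k _; apply: Amat_dec.
rewrite pr_WAW trC mulrA WiW mul1r.
have [p' Ep] : exists p', p = p'.+1.
  by case: (p) Hprime => // p' _; exists p'.
rewrite Ep pr_LK trC mulrA.
rewrite (KL (zk 0) (zk p')); last first.
  by rewrite /zk -addrA natr1 -Ep Hp0S mulr0n !addr0.
rewrite trC pr_recl; congr (\tr (_ * _)); apply: pr_ext => k _; apply: KL.
by rewrite /zk -addrA natr1.
Qed.


Lemma chip0 : (chip p f g a1 a2 t w).[0] = Ip p f g a1 a2 t w.
Proof.
rewrite /chip /Ip (pr_big p (fun k => Amat f%:P g%:P a1%:P a2%:P t%:P w%:P (w^-1)%:P (zk k))).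
rewrite (pr_big p (fun k => Amat f g a1 a2 t w w^-1 k%:R)).
have trmap : forall A : 'M[S]_2, (\tr A).[0] = \tr (map_mx (horner_eval 0) A).
  by move=> A; rewrite !tr2E !mxE hornerD.
rewrite trmap pr_morph; congr (\tr _); apply: pr_ext => k _.
rewrite /Amat !mulmxE !rmorphM /= !mx2_map /= !horner_evalE.
rewrite /zk !(hornerD, hornerN, hornerM, hornerC, hornerX) -polyC_natr hornerC add0r.
by [].
Qed.


Lemma unit_nat j : (0 < j < p)%N -> (j%:R : R) \is a GRing.unit.
Proof.
move=> /andP[j0 jp].
have p0 : (0 < p)%N by apply: prime_gt0 Hprime.
have [a _ Ha] := Bezoutl j p0.
have Hg : gcdn p j = 1%N.
  by apply/eqP; rewrite -/(coprime p j) prime_coprime ?Hprime // gtnNdvd.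
rewrite Hg in Ha; case/dvdnP: Ha => q Hq.
have H1 : (1 + a%:R * j%:R : R) = 0.
  have : ((1 + a * j)%N%:R : R) = (q * p)%N%:R by rewrite Hq.
  by rewrite natrM Hp0 mulr0 natrD natrM.
apply/unitrPr; exists (- a%:R); rewrite mulrN mulrC.
by apply/eqP; rewrite eq_sym -subr_eq0 opprK H1.
Qed.

Lemma unit_nat2 j : (0 < j < p + p)%N -> j != p -> (j%:R : R) \is a GRing.unit.
Proof.
move=> /andP[j0 jp] jn; have [lt|ge] := ltnP j p.
  by apply: unit_nat; rewrite j0 lt.
have -> : j = (p + (j - p))%N by rewrite subnKC.
rewrite natrD Hp0 add0r; apply: unit_nat.
by apply/andP; split; move: ge jp jn; clear; move=> ge jp /eqP jn; lia.
Qed.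

Lemma unit_cancel j (c : R) : (j%:R : R) \is a GRing.unit -> c *+ j = 0 -> c = 0.
Proof.
move=> Hu H; apply: (mulrI Hu); rewrite mulr0 mulr_natl; exact: H.
Qed.

Lemma coef_shift (h : S) (c : R) m :
  (h \Po ('X + c%:P))`_m = \sum_(n < size h) h`_n * (c ^+ (n - m) *+ 'C(n, m)).
Proof.
rewrite coef_comp_poly; apply: eq_bigr => n _; congr (_ * _).
rewrite addrC exprDn coef_sum.
under eq_bigr => i _ do rewrite coefMn -polyC_exp coefCM coefXn.
have [lt|gt] := ltnP m n.+1.
  rewrite (bigD1 (Ordinal lt)) //= big1 ?addr0; first by rewrite eqxx mulr1.
  move=> i /= Hi; rewrite (_ : (m == i) = false) ?mulr0 ?mul0rn //.
  by apply/negbTE; apply: contra Hi => /eqP E; apply/eqP/val_inj.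
rewrite bin_small // mulr0n big1 // => i _.
by rewrite (_ : (m == i) = false) ?mulr0 ?mul0rn //; apply/negbTE; move: (ltn_ord i) gt; clear; move=> a b; apply/eqP; lia.
Qed.

Lemma power_sum e : (e.+1 < p)%N -> \sum_(i < p) (i%:R : R) ^+ e = 0.
Proof.
elim/ltn_ind: e => e IH He.
have tel : \sum_(i < p) (((i.+1)%:R : R) ^+ e.+1 - (i%:R) ^+ e.+1) = 0.
  rewrite -(big_mkord xpredT (fun i => ((i.+1)%:R : R) ^+ e.+1 - (i%:R) ^+ e.+1)).
  by rewrite telescope_sumr // Hp0 expr0n /= subr0.
have step : forall x : R, (x + 1) ^+ e.+1 - x ^+ e.+1 = \sum_(k < e.+1) x ^+ k *+ 'C(e.+1, k).
  move=> x; rewrite (addrC x 1) exprDn big_ord_recr /= subnn expr0 mul1r binn mulr1n.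
  by rewrite addrK; apply: eq_bigr => k _; rewrite expr1n mul1r.
rewrite (eq_bigr (fun i : 'I_p => \sum_(k < e.+1) (i%:R : R) ^+ k *+ 'C(e.+1, k))) in tel; last first.
  by move=> i _; rewrite -natr1 step.
rewrite exchange_big /= big_ord_recr /= in tel.
rewrite big1 ?add0r in tel; last first.
  move=> k _; rewrite sumrMnl IH ?mul0rn //; move: (ltn_ord k) He; clear; lia.
rewrite sumrMnl binSn in tel.
apply: (@unit_cancel e.+1) => //; apply: unit_nat; apply/andP; split => //.
Qed.


Lemma sumshift (h : S) : (size h <= (p + p).-1)%N ->
  (\sum_(i < p) (h \Po ('X + (i%:R)%:P)))`_p = 0.
Proof.
move=> Hs; rewrite coef_sum.
under eq_bigr do rewrite coef_shift.
rewrite exchange_big /=; apply: big1 => n _.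
rewrite -mulr_sumr sumrMnl.
have [lt|ge] := ltnP n p; first by rewrite bin_small // mulr0n mulr0.
rewrite power_sum ?mul0rn ?mulr0 //.
move: (ltn_ord n) Hs ge; move: (nat_of_ord n) => a; clear n; move: (size h) => b; clear; lia.
Qed.

Lemma topC (h : S) k : h \Po ('X + 1) = h -> size h = k.+2 ->
  (k.+2 <= p + p)%N -> k.+1 != p -> False.
Proof.
move=> Hh Hs Hk Hkp.
have := congr1 (fun q : S => q`_k) Hh; rewrite -polyC1 coef_shift Hs /=.
rewrite !big_ord_recr /= big1; last first.
  by move=> i _; rewrite bin_small ?mulr0n ?mulr0.
rewrite add0r subnn binn binSn expr0 expr1n mulr1n mulr1 => /eqP.
rewrite -subr_eq0 addrAC subrr add0r mulr_natr => /eqP E.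
have Hu : ((k.+1)%:R : R) \is a GRing.unit.
  by apply: unit_nat2 => //; apply/andP; split => //; move: Hk; clear; lia.
have E' : h`_k.+1 = 0 by apply: (@unit_cancel k.+1).
have : h != 0 by rewrite -size_poly_eq0 Hs.
by rewrite -lead_coef_eq0 lead_coefE Hs /= E' eqxx.
Qed.

Lemma XpX_inv : ('X ^+ p - 'X : S) \Po ('X + 1) = 'X ^+ p - 'X.
Proof.
rewrite comp_polyB comp_polyX rmorphXn /= comp_polyX.
have HpS : p \in [pchar S] by rewrite pchar_poly.
rewrite -!(pFrobenius_autE HpS) pFrobenius_autD_comm; last exact: mulrC.
by rewrite pFrobenius_aut1 opprD addrACA subrr addr0.
Qed.

Lemma structure (h : S) : h \Po ('X + 1) = h -> (size h <= p + p)%N ->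
  h = (h`_0)%:P + (h`_p)%:P * ('X ^+ p - 'X).
Proof.
move=> Hh Hs.
have p2 : (2 <= p)%N by apply: prime_gt1 Hprime.
have Hs1 : (size h <= p.+1)%N.
  case E: (size h) => [|[|k]] //; rewrite leqNgt; apply/negP => Hk.
  apply: (@topC _ _ Hh E); first by rewrite -E.
  by move: Hk; clear; move=> Hk; apply/eqP; lia.
set h' := h - (h`_p)%:P * ('X ^+ p - 'X).
have Hh' : h' \Po ('X + 1) = h'.
  by rewrite /h' comp_polyB comp_polyM comp_polyC XpX_inv Hh.
have Hs' : (size h' <= p)%N.
  apply/leq_sizeP => j Hj.
  rewrite /h' coefB coefCM coefB coefXn coefX.
  have -> : (j == 1%N) = false by apply/negbTE; move: Hj p2; clear; move=> a b; apply/eqP; lia.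
  rewrite subr0; case: eqP => [->|/eqP jp]; first by rewrite mulr1 subrr.
  rewrite mulr0 subr0 nth_default //; apply: leq_trans Hs1 _.
  by move: Hj jp; clear; move=> a /eqP b; lia.
have Hs'' : (size h' <= 1)%N.
  case E: (size h') => [|[|k]] //; rewrite leqNgt; apply/negP => Hk.
  apply: (@topC _ _ Hh' E); first by rewrite -E; apply: leq_trans Hs' _; apply: leq_addr.
  by apply/eqP => E2; move: Hs'; rewrite E E2; clear; lia.
have := size1_polyC Hs''; rewrite /h' coefB coefCM coefB coefXn coefX.
have -> : (0 == p)%N = false by apply/negbTE; move: p2; clear; move=> a; apply/eqP; lia.
rewrite subr0 mulr0 subr0 => E; rewrite -E /h' subrK //.
Qed.


Definition Dm (y : S) : 'M[S]_2 := mx2 (P00 y) 0 0 (P11 y).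
Definition Om (y : S) : 'M[S]_2 := mx2 0 (P01 y) (P10 y) 0.

Lemma Pm_morph (phi : {rmorphism S -> S}) y :
  (forall c, phi c%:P = c%:P) ->
  [/\ map_mx phi (Pm y) = Pm (phi y), map_mx phi (Dm y) = Dm (phi y)
    & map_mx phi (Om y) = Om (phi y)].
Proof.
move=> Hc; rewrite /Pm /Dm /Om !mx2_map /P00 /P01 /P10 /P11.
by rewrite !(rmorphD, rmorphM, rmorphN, rmorphB, rmorph0, Hc).
Qed.

Lemma tr_comp (A : 'M[S]_2) r : (\tr A) \Po r = \tr (map_mx (comp_poly r) A).
Proof. by rewrite !tr2E !mxE comp_polyD. Qed.

Lemma zk_comp k i : zk k \Po ('X + (i%:R)%:P) = zk (k + i).
Proof.
rewrite /zk comp_polyD comp_polyX.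
have -> : (k%:R : S) \Po ('X + (i%:R)%:P) = k%:R by rewrite -polyC_natr comp_polyC.
by rewrite polyC_natr natrD addrA addrAC.
Qed.

Lemma chi_inv : (\tr (pr p (fun k => Pm (zk k)))) \Po ('X + 1)
   = \tr (pr p (fun k => Pm (zk k))).
Proof.
rewrite tr_comp pr_morph.
transitivity (\tr (pr p (fun k => Pm (zk k.+1)))).
  congr (\tr _); apply: pr_ext => k _ /=.
  have [-> _ _] := Pm_morph (comp_poly ('X + 1)) (zk k) (fun c => comp_polyC _ _).
  congr Pm; change (zk k \Po ('X + 1) = zk k.+1).
  rewrite /zk comp_polyD comp_polyX -polyC_natr comp_polyC polyC_natr.
  by rewrite -natr1 addrA addrAC.
have [p' Ep] : exists p', p = p'.+1.
  by case: (p) Hprime => // p' _; exists p'.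
have Z : zk p = zk 0 by rewrite -(zk_p 0) add0n.
rewrite Ep prS -Ep Z trC.
by rewrite Ep pr_recl.
Qed.


Definition Bnd (N : 'M[S]_2) (e : nat) : Prop :=
  [/\ (2 * size (N i0 i0) <= e + 2)%N, (2 * size (N i1 i1) <= e + 2)%N,
      (2 * size (N i0 i1) <= e + 1)%N & (2 * size (N i1 i0) <= e + 3)%N].

Lemma BndW {N e e'} : (e <= e')%N -> Bnd N e -> Bnd N e'.
Proof.
move=> H [h1 h2 h3 h4]; split.
- by apply: leq_trans h1 _; rewrite leq_add2r.
- by apply: leq_trans h2 _; rewrite leq_add2r.
- by apply: leq_trans h3 _; rewrite leq_add2r.
- by apply: leq_trans h4 _; rewrite leq_add2r.
Qed.

Lemma Bnd0 e : Bnd 0 e.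
Proof. by split; rewrite mxE size_poly0. Qed.

Lemma szD2 (x y : S) m : (2 * size x <= m)%N -> (2 * size y <= m)%N ->
  (2 * size (x + y)%R <= m)%N.
Proof.
move=> hx hy; apply: leq_trans (leq_mul (leqnn 2) (size_polyD x y)) _.
by rewrite maxnMr geq_max hx hy.
Qed.

Lemma BndD {A B e} : Bnd A e -> Bnd B e -> Bnd (A + B) e.
Proof.
by move=> [x1 x2 x3 x4] [y1 y2 y3 y4]; split; rewrite mxE; apply: szD2.
Qed.

Lemma Bnd_sum I (r : seq I) (P : pred I) (F : I -> 'M[S]_2) e :
  (forall i, P i -> Bnd (F i) e) -> Bnd (\sum_(i <- r | P i) F i) e.
Proof.
move=> H; apply: (big_ind (fun N => Bnd N e)); [exact: Bnd0 | move=> x y hx hy; exact (BndD hx hy) | exact: H].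
Qed.

Lemma szM2 (x y : S) m : (2 * size x + 2 * size y <= m + 2)%N ->
  (2 * size (x * y)%R <= m)%N.
Proof.
move=> h; apply: leq_trans (leq_mul (leqnn 2) (size_polyMleq x y)) _.
move: h; move: (size x) (size y) => a b; clear; lia.
Qed.

Lemma szMD (x y u v : S) m : (2 * size x + 2 * size y <= m + 2)%N ->
  (2 * size u + 2 * size v <= m + 2)%N -> (2 * size (x * y + u * v)%R <= m)%N.
Proof. by move=> h1 h2; apply: szD2; apply: szM2. Qed.

Lemma BndM {A B e e'} : Bnd A e -> Bnd B e' -> Bnd (A * B) (e + e').
Proof.
move=> [x1 x2 x3 x4] [y1 y2 y3 y4]; split; rewrite mulmx2E; apply: szMD;
  move: x1 x2 x3 x4 y1 y2 y3 y4;
  move: (size (A i0 i0)) (size (A i0 i1)) (size (A i1 i0)) (size (A i1 i1))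
        (size (B i0 i0)) (size (B i0 i1)) (size (B i1 i0)) (size (B i1 i1));
  clear; lia.
Qed.

Lemma Bnd1 : Bnd 1 0.
Proof. by rewrite -mx2_1; split; rewrite mxE /= ?size_poly1 ?size_poly0. Qed.

Lemma Bnd_pr n (M : nat -> 'M[S]_2) e :
  (forall k, Bnd (M k) e) -> Bnd (pr n M) (e * n).
Proof.
move=> H; elim: n => [|n IH] /=; first by rewrite muln0; exact: Bnd1.
by rewrite mulnS; apply: BndM.
Qed.

Lemma Bnd_tr {N e} : Bnd N e -> (2 * size (\tr N) <= e + 2)%N.
Proof. by move=> [h1 h2 _ _]; rewrite tr2E; apply: szD2. Qed.

Lemma size_zk k : (size (zk k) <= 2)%N.
Proof. by rewrite /zk -polyC_natr size_XaddC. Qed.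

Lemma szC (c : R) : (size c%:P <= 1)%N.
Proof. exact: size_polyC_leq1. Qed.

Lemma szMle {x y : S} {a b : nat} : (size x <= a)%N -> (size y <= b)%N ->
  (size (x * y)%R <= (a + b).-1)%N.
Proof.
move=> ha hb; apply: leq_trans (size_polyMleq x y) _.
move: ha hb; move: (size x) (size y) => u v; clear; lia.
Qed.

Lemma szDle (x y : S) a : (size x <= a)%N -> (size y <= a)%N -> (size (x + y)%R <= a)%N.
Proof. by move=> ha hb; apply: leq_trans (size_polyD x y) _; rewrite geq_max ha hb. Qed.

Lemma szBle (x y : S) a : (size x <= a)%N -> (size y <= a)%N -> (size (x - y)%R <= a)%N.
Proof. by move=> ha hb; apply: szDle => //; rewrite size_polyN. Qed.

Lemma szC2 (c : R) a : (1 <= a)%N -> (size c%:P <= a)%N.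
Proof. by move=> h; apply: leq_trans (szC c) h. Qed.

Lemma sizes_P k :
  [/\ (size (P00 (zk k)) <= 2)%N, (size (P01 (zk k)) <= 2)%N,
      (size (P10 (zk k)) <= 3)%N & (size (P11 (zk k)) <= 2)%N].
Proof.
have hz := size_zk k.
split.
- apply: szDle; last exact: szC2.
  exact: (@szMle _ _ 1 2 (szC _) hz).
- by apply: szBle => //; apply: szC2.
- by apply: (@szMle _ _ 2 2); [apply: szDle|apply: szBle] => //; apply: szC2.
- rewrite size_polyN; apply: (@szMle _ _ 1 2) => //; first exact: szC.
  by apply: szDle => //; apply: szC2.
Qed.

Lemma Bnd_P k : [/\ Bnd (Pm (zk k)) 3, Bnd (Dm (zk k)) 2 & Bnd (Om (zk k)) 3].
Proof.
have [h1 h2 h3 h4] := sizes_P k.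
rewrite /Pm /Dm /Om; split; split; rewrite mxE /= ?size_poly0 //;
  move: h1 h2 h3 h4; move: (size (P00 (zk k))) (size (P01 (zk k)))
   (size (P10 (zk k))) (size (P11 (zk k))); clear; lia.
Qed.


Local Notation Mx := 'M[S]_2.
Local Notation E := {poly Mx}.

Definition Qe k : E := (Dm (zk k))%:P + 'X * (Om (zk k))%:P.
Definition Oe k : E := (Om (zk k))%:P.

Definition WB (A : E) e := forall j, Bnd (A`_j) (e + j).

Lemma WBM A B e e' : WB A e -> WB B e' -> WB (A * B) (e + e').
Proof.
move=> hA hB j; rewrite coefM; apply: Bnd_sum => i _.
apply: (BndW _ (BndM (hA i) (hB (j - i)%N))).
by move: (ltn_ord i); move: (nat_of_ord i) => a; clear; lia.
Qed.

Lemma WB1 : WB 1 0.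
Proof.
move=> j; rewrite coefC; case: eqP => [->|_]; last exact: Bnd0.
exact: Bnd1.
Qed.

Lemma WB_pr n (M : nat -> E) e : (forall k, WB (M k) e) -> WB (pr n M) (e * n).
Proof.
move=> H; elim: n => [|n IH] /=; first by rewrite muln0; exact: WB1.
by rewrite mulnS; apply: WBM.
Qed.

Lemma coef_Qe k j :
  (Qe k)`_j = if j == 0%N then Dm (zk k) else if j == 1%N then Om (zk k) else 0.
Proof.
rewrite /Qe coefD coefXM !coefC; case: j => [|[|j]] //=.
  by rewrite addr0.
by rewrite add0r.
by rewrite add0r.
Qed.

Lemma WBQ k : WB (Qe k) 2.
Proof.
have [_ h2 h3] := Bnd_P k.
move=> j; rewrite coef_Qe; case: j => [|[|j]] /=; [by rewrite ?addn0 | by rewrite ?addn1 | exact: Bnd0].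
Qed.

Lemma WBO k : WB (Oe k) 3.
Proof.
have [_ _ h3] := Bnd_P k.
move=> j; rewrite /Oe coefC; case: j => [|j] /=; [by rewrite ?addn0 | exact: Bnd0].
Qed.

Lemma size_Qe k : (size (Qe k) <= 2)%N.
Proof.
rewrite /Qe; apply: leq_trans (size_polyD _ _) _; rewrite geq_max.
rewrite (leq_trans (size_polyC_leq1 _)) //=.
apply: leq_trans (size_polyMleq _ _) _; rewrite size_polyX.
by have := size_polyC_leq1 (Om (zk k)); case: (size _) => [|[|]].
Qed.

Lemma Qe_1 k : (Qe k)`_1 = Om (zk k).
Proof. by rewrite coef_Qe. Qed.

Lemma Qe_0 k : (Qe k)`_0 = Dm (zk k).
Proof. by rewrite coef_Qe. Qed.

Lemma Psi_0 n : (pr n Qe)`_0 = pr n (fun k => Dm (zk k)).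
Proof. by elim: n => [|n IH] /=; rewrite ?coefC // coef0M IH Qe_0. Qed.

Lemma Psi_top n : (size (pr n Qe) <= n.+1)%N /\ (pr n Qe)`_n = pr n (fun k => Om (zk k)).
Proof.
have [h1 h2] := pr_top n Qe size_Qe; split => //; rewrite h2.
by apply: pr_ext => k _; rewrite Qe_1.
Qed.

Lemma Qe_eval k : (Qe k).[1] = Pm (zk k).
Proof.
rewrite /Qe hornerD hornerC -commr_polyX hornerMX hornerC mulr1.
by rewrite /Pm /Dm /Om mx2_add !(addr0, add0r).
Qed.

Lemma pr_eval n (M : nat -> E) : (pr n M).[1] = pr n (fun k => (M k).[1]).
Proof.
elim: n => [|n IH] /=; first by rewrite hornerC.
rewrite hornerM_comm ?IH //; by rewrite /comm_poly mulr1 mul1r.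
Qed.

Lemma chi_sum :
  \tr (pr p (fun k => Pm (zk k))) = \sum_(j < p.+1) \tr ((pr p Qe)`_j).
Proof.
have [hs _] := Psi_top p.
rewrite (@pr_ext _ p _ (fun k => (Qe k).[1])); last by move=> k _; rewrite Qe_eval.
rewrite -pr_eval (horner_coef_wide _ hs) raddf_sum; apply: eq_bigr => j _.
by rewrite expr1n mulr1.
Qed.


Lemma pr_deriv n (M : nat -> E) :
  (pr n M)^`() = \sum_(i < n) pr n (fun k => if k == i then (M k)^`() else M k).
Proof.
elim: n => [|n IH] /=; first by rewrite big_ord0 -polyC1 derivC.
rewrite derivM IH big_ord_recr /= eqxx addrC mulr_sumr; congr (_ + _).
  congr (_ * _); apply: pr_ext => k Hk; rewrite ifN //; apply/eqP => E1.
  by move: Hk; rewrite E1 ltnn.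
apply: eq_bigr => i _; rewrite ifN //; apply/eqP => E1.
by move: (ltn_ord i); rewrite -E1 ltnn.
Qed.

Lemma deriv_Qe k : (Qe k)^`() = Oe k.
Proof. by rewrite /Qe derivD derivC add0r derivM derivX derivC mul1r mulr0 addr0. Qed.

Lemma Qe_p k : Qe (k + p) = Qe k.
Proof. by rewrite /Qe zk_p. Qed.

Lemma trE (x y : E) m : \tr ((x * y)`_m) = \tr ((y * x)`_m).
Proof.
rewrite !coefM !raddf_sum [RHS](reindex_inj rev_ord_inj) /=.
apply: eq_bigr => i _; rewrite trC; congr (\tr (_ * _)); congr (_`_ _).
by move: (ltn_ord i); move: (nat_of_ord i) => a; clear; lia.
Qed.

Notation Sh i := (map_poly (map_mx (comp_poly ('X + (i%:R)%:P : S)) : Mx -> Mx)).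

Lemma Sh_Qe i k : Sh i (Qe k) = Qe (k + i).
Proof.
rewrite /Qe rmorphD rmorphM /= map_polyC map_polyX /= map_polyC /=.
have [_ -> ->] := Pm_morph (comp_poly ('X + (i%:R)%:P)) (zk k) (fun c => comp_polyC _ _).
by rewrite -(zk_comp k i).
Qed.

Lemma Sh_Oe i k : Sh i (Oe k) = Oe (k + i).
Proof.
rewrite /Oe map_polyC /=.
have [_ _ ->] := Pm_morph (comp_poly ('X + (i%:R)%:P)) (zk k) (fun c => comp_polyC _ _).
by rewrite -(zk_comp k i).
Qed.

Lemma rot i m : (i < p)%N ->
  \tr ((pr p (fun k => if k == i then Oe k else Qe k))`_m) =
  (\tr ((pr p.-1 (fun k => Qe k.+1) * Oe 0)`_m)) \Po ('X + (i%:R)%:P).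
Proof.
move=> ip.
have Ep : p = (i.+1 + (p - i.+1))%N by rewrite subnKC.
have H1 : pr p (fun k => if k == i then Oe k else Qe k) =
    pr (p - i.+1) (fun k => Qe (i.+1 + k)) * (Oe i * pr i Qe).
  rewrite {1}Ep pr_split prS eqxx; congr (_ * (_ * _)).
    apply: pr_ext => k _; rewrite ifN //; apply/eqP.
    by move: k; clear; move=> k; lia.
  apply: pr_ext => k Hk; rewrite ifN //; apply/eqP.
  by move: k Hk; clear; move=> k Hk; lia.
rewrite H1 trE -mulrA trE.
have H2 : pr i Qe * pr (p - i.+1) (fun k => Qe (i.+1 + k)) =
    pr p.-1 (fun k => Qe (i.+1 + k)).
  have Ep' : p.-1 = (p - i.+1 + i)%N by move: ip; clear; lia.
  rewrite Ep' pr_split; congr (_ * _); apply: pr_ext => k _.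
  rewrite -Qe_p; congr Qe; move: ip; clear; lia.
rewrite H2 tr_comp; congr (\tr _).
transitivity ((Sh i (pr p.-1 (fun k => Qe k.+1) * Oe 0))`_m); last by rewrite coef_map.
rewrite rmorphM pr_morph /= Sh_Oe add0n; apply: (congr1 (fun q : E => q`_m)); congr (_ * _).
by apply: pr_ext => k _; rewrite Sh_Qe addSn addnC.
Qed.


Definition Gam := pr p.-1 (fun k => Qe k.+1) * Oe 0.

Lemma mid j : (0 < j < p)%N -> (\tr ((pr p Qe)`_j))`_p = 0.
Proof.
move=> /andP[j0 jp].
have p2 : (2 <= p)%N by apply: prime_gt1 Hprime.
have D : (pr p Qe)^`() = \sum_(i < p) pr p (fun k => if k == i then Oe k else Qe k).
  rewrite pr_deriv; apply: eq_bigr => i _; apply: pr_ext => k _.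
  by case: (k == i) => //; rewrite deriv_Qe.
case: j j0 jp => // j _ jp.
have C : (\tr ((pr p Qe)`_j.+1)) *+ j.+1 =
    \sum_(i < p) ((\tr (Gam`_j)) \Po ('X + (i%:R)%:P)).
  rewrite -raddfMn -coef_deriv D coef_sum raddf_sum; apply: eq_bigr => i _.
  exact: (rot i j (ltn_ord i)).
have HW : WB Gam (2 * p.-1 + 3) by apply: WBM; [apply: WB_pr => k; exact: WBQ | exact: WBO].
have Hs : (size (\tr (Gam`_j)) <= (p + p).-1)%N.
  have := Bnd_tr (HW j); move: jp p2; move: (size (\tr Gam`_j)) => s; clear; lia.
have := congr1 (fun q : S => q`_p) C; rewrite /= coefMn sumshift //.
apply: unit_cancel; apply: unit_nat; by rewrite jp.
Qed.

Lemma pr_Dm n : pr n (fun k => Dm (zk k)) =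
  mx2 (pr n (fun k => P00 (zk k))) 0 0 (pr n (fun k => P11 (zk k))).
Proof.
elim: n => [|n IH] /=; first by rewrite mx2_1.
by rewrite IH /Dm mx2_mul !(mul0r, mulr0, addr0, add0r).
Qed.

Lemma pr_Om n : exists x y, pr n (fun k => Om (zk k)) =
  if odd n then mx2 0 x y 0 else mx2 x 0 0 y.
Proof.
elim: n => [|n [x [y IH]]] /=; first by exists 1, 1; rewrite mx2_1.
rewrite IH /Om; case: (odd n) => /=; rewrite mx2_mul !(mul0r, mulr0, addr0, add0r).
  by exists (P01 (zk n) * y), (P10 (zk n) * x).
by exists (P01 (zk n) * y), (P10 (zk n) * x).
Qed.

Lemma P00_1 k : (P00 (zk k))`_1 = f + t.
Proof.
rewrite /P00 /zk coefD coefCM coefD coefX -polyC_natr !coefC /=.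
by rewrite !addr0 mulr1.
Qed.

Lemma P11_1 k : (P11 (zk k))`_1 = - f.
Proof.
rewrite /P11 /zk coefN coefCM !coefD coefX -polyC_natr !coefC /=.
by rewrite !addr0 mulr1.
Qed.

Lemma low_coef : (\tr ((pr p Qe)`_0))`_p = (f + t) ^+ p + (- f) ^+ p.
Proof.
rewrite Psi_0 pr_Dm mx2_tr coefD.
have [_ h1] := pr_top p (fun k => P00 (zk k)) (fun k => let: And4 a _ _ _ := sizes_P k in a).
have [_ h2] := pr_top p (fun k => P11 (zk k)) (fun k => let: And4 _ _ _ a := sizes_P k in a).
rewrite h1 h2 -!pr_const; congr (_ + _); apply: pr_ext => k _.
  exact: P00_1.
exact: P11_1.
Qed.

Lemma cubic (a b c : R) :
  (('X + a%:P) * ('X + b%:P) * ('X + c%:P) : S)`_2 = a + b + c.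
Proof.
have -> : (('X + a%:P) * ('X + b%:P) * ('X + c%:P) : S) =
   'X^3 + 'X^2 * (a + b + c)%:P + 'X * (a * b + b * c + c * a)%:P + (a * b * c)%:P.
  rewrite !(polyCD, polyCM); ring.
by rewrite !coefD coefXn coefXnM coefXM !coefC /= add0r addr0 addr0.
Qed.

Lemma top_coef2 : p = 2%N -> (\tr ((pr p Qe)`_p))`_p = 1.
Proof.
move=> E2; have [_ ->] := Psi_top p.
rewrite E2 /= mulr1 /Om mx2_mul mx2_tr !(mul0r, mulr0, addr0, add0r).
have h2 : (2%:R : R) = 0 by rewrite -E2 Hp0.
have -> : P01 (zk 1) * P10 (zk 0) =
    ('X + (1 - f * g)%:P) * ('X + a2%:P) * ('X + (- be)%:P).
  by rewrite /P01 /P10 /zk mulr0n addr0 !(polyCB, polyCN, polyC1); ring.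
have -> : P10 (zk 1) * P01 (zk 0) =
    ('X + (1 + a2)%:P) * ('X + (1 - be)%:P) * ('X + (- (f * g))%:P).
  by rewrite /P01 /P10 /zk mulr0n addr0 !(polyCB, polyCN, polyC1, polyCD); ring.
rewrite coefD !cubic.
have -> : 1 - f * g + a2 + - be + (1 + a2 + (1 - be) + - (f * g)) =
   1 + 2%:R * (1 - f * g + a2 - be) by ring.
by rewrite h2 mul0r addr0.
Qed.

Lemma top_coef_odd : odd p -> (\tr ((pr p Qe)`_p))`_p = 0.
Proof.
move=> op; have [_ ->] := Psi_top p.
have [x [y ->]] := pr_Om p; rewrite op mx2_tr addr0 coef0.
by [].
Qed.


Lemma chi_coef_p : (\tr (pr p (fun k => Pm (zk k))))`_p =
  (f + t) ^+ p + (- f) ^+ p + (if p == 2%N then 1 else 0).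
Proof.
rewrite chi_sum coef_sum big_ord_recr /=.
rewrite (bigD1 (Ordinal (prime_gt0 Hprime))) //= big1 ?addr0; last first.
  move=> j Hj; apply: mid; apply/andP; split => //.
  by rewrite lt0n; apply: contra Hj => /eqP E0; apply/eqP/val_inj.
rewrite low_coef; congr (_ + _); case: eqP => [E2|/eqP N2].
  exact: top_coef2.
have [E2|op] := even_prime Hprime; first by rewrite E2 in N2.
exact: top_coef_odd.
Qed.

Lemma main_lemma :
  chip p f g a1 a2 t w =
    if p != 2%N then
      (Ip p f g a1 a2 t w)%:P - (t ^+ p)%:P * 'X + (t ^+ p)%:P * 'X ^+ p
    else
      (Ip p f g a1 a2 t w)%:P + (1 + t ^+ 2)%:P * ('X + 'X ^+ 2).
Proof.
have p2 : (2 <= p)%N by apply: prime_gt1 Hprime.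
have H0 : (\tr (pr p (fun k => Pm (zk k))))`_0 = Ip p f g a1 a2 t w.
  by rewrite -horner_coef0 -chip_P chip0.
rewrite chip_P.
have Hs : (size (\tr (pr p (fun k => Pm (zk k)))) <= p + p)%N.
  have HB : Bnd (pr p (fun k => Pm (zk k))) (3 * p).
    by apply: Bnd_pr => k; have [h _ _] := Bnd_P k.
  have := Bnd_tr HB; move: p2; move: (size (\tr (pr p (fun k => Pm (zk k))))) => s0; clear; lia.
rewrite (structure _ chi_inv Hs) H0 chi_coef_p.
case: eqP => [E2|/eqP N2] /=.
  rewrite E2 /=.
  have h2 : (2%:R : R) = 0 by rewrite -E2 Hp0.
  have -> : (f + t) ^+ 2 + (- f) ^+ 2 + 1 = 1 + t ^+ 2 + 2%:R * (f * f + f * t) by ring.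
  rewrite h2 mul0r addr0; congr (_ + _ * _).
  have h2S : (2%:R : S) = 0 by rewrite -polyC_natr h2.
  have -> : ('X ^+ 2 - 'X : S) = 'X + 'X ^+ 2 - 2%:R * 'X by ring.
  by rewrite h2S mul0r subr0.
have [E2|op] := even_prime Hprime; first by rewrite E2 in N2.
rewrite addr0 exprNn -signr_odd op expr1.
rewrite -!(pFrobenius_autE Hp) pFrobenius_autD_comm; last exact: mulrC.
rewrite !(pFrobenius_autE Hp).
rewrite (_ : f ^+ p + t ^+ p + -1 * f ^+ p = t ^+ p); last by ring.
ring.
Qed.

End Main.

Theorem proposition3p5 (R : comUnitRingType) (p : nat) (f g al1 al2 t w : R) :
  p \in [pchar R] -> w \is a GRing.unit ->
  chip p f g al1 al2 t w =
    if p != 2%N then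
      (Ip p f g al1 al2 t w)%:P - (t ^+ p)%:P * 'X + (t ^+ p)%:P * 'X ^+ p
    else
      (Ip p f g al1 al2 t w)%:P + (1 + t ^+ 2)%:P * ('X + 'X ^+ 2).
Proof. by move=> Hp Hw; apply: main_lemma. Qed.
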